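(* Let $A$ be a cyclic Leibniz algebra generated by $a$, with notation $L_a$, $p(x)=p_1(x)^{n_1}\cdots p_s(x)^{n_s}$ as in the context. Then the Frattini subalgebra of $A$ is $$\Phi(A)=\{b\in A : q(L_a)(b)=0\},\qquad q(x)=p_1(x)^{n_1-1}\cdots p_s(x)^{n_s-1}.$$
   Context: A (left) Leibniz algebra is an algebra satisfying $x(yz)=(xy)z+y(xz)$ for all $x,y,z$; all algebras are finite-dimensional over a field $F$. $A$ is a cyclic Leibniz algebra generated by $a$: $A$ is generated as an algebra by the single element $a$, and with $a^1=a$, $a^{k+1}=aa^k$, the elements $a,a^2,\dots,a^n$ form a basis of $A$ ($n=\dim A$). Write $aa^n=\alpha_2a^2+\cdots+\alpha_na^n$ (the coefficient of $a$ is necessarily $0$). $L_a:A\to A$ denotes left multiplication $b\mapsto ab$; its matrix in this basis is the companion matrix of $p(x)=x^n-\alpha_nx^{n-1}-\cdots-\alpha_2x$. Factor $p(x)=p_1(x)^{n_1}\cdots p_s(x)^{n_s}$ with $p_1,\dots,p_s$ the distinct monic irreducible factors over $F$, and $p_1(x)=x$. The Frattini subalgebra $\Phi(A)$ is the intersection of all maximal subalgebras of $A$. *)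

(* Defs.v *)
From HB Require Import structures.
From mathcomp Require Import all_boot all_order all_algebra.
Set Implicit Arguments. Unset Strict Implicit. Unset Printing Implicit Defensive.
Import GRing.Theory.
Local Open Scope ring_scope.

(* An algebra structure on a finite-dimensional F-vector space A is given by a
   multiplication mul : A -> A -> A; bilinearity is a hypothesis of the theorem. *)
Definition bilinear_mul (F : fieldType) (A : vectType F) (mul : A -> A -> A) :=
  (forall x y z (c : F), mul x (c *: y + z) = c *: mul x y + mul x z) /\
  (forall x y z (c : F), mul (c *: x + y) z = c *: mul x z + mul y z).

Definition left_leibniz (F : fieldType) (A : vectType F) (mul : A -> A -> A) :=
  forall x y z, mul x (mul y z) = mul (mul x y) z + mul y (mul x z).

Definition is_subalg (F : fieldType) (A : vectType F) (mul : A -> A -> A)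
  (U : {vspace A}) := forall x y, x \in U -> y \in U -> mul x y \in U.

Definition is_max_subalg (F : fieldType) (A : vectType F) (mul : A -> A -> A)
  (M : {vspace A}) :=
  [/\ is_subalg mul M, M != fullv &
      forall V : {vspace A}, is_subalg mul V -> (M <= V)%VS -> V = M \/ V = fullv].

(* b lies in the Frattini subalgebra: the intersection of all maximal subalgebras
   (the empty intersection being A) *)
Definition in_frattini (F : fieldType) (A : vectType F) (mul : A -> A -> A) (b : A) :=
  forall M : {vspace A}, is_max_subalg mul M -> b \in M.

Definition generated_by (F : fieldType) (A : vectType F) (mul : A -> A -> A) (a : A) :=
  forall U : {vspace A}, is_subalg mul U -> a \in U -> U = fullv.

(* left powers: lpow mul a k = a^k with a^1 = a, a^(k+1) = a a^k  (k >= 1) *)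
Definition lpow (F : fieldType) (A : vectType F) (mul : A -> A -> A) (a : A) (k : nat) : A :=
  iter k.-1 (mul a) a.

Definition peval (F : fieldType) (A : vectType F) (q : {poly F}) (f : A -> A) (b : A) : A :=
  \sum_(i < size q) q`_i *: iter i f b.

(* Main.v *)
Require Import Defs.
From HB Require Import structures.
From mathcomp Require Import all_boot all_order all_algebra.
From Stdlib Require Import Classical.
Set Implicit Arguments. Unset Strict Implicit. Unset Printing Implicit Defensive.
Import GRing.Theory.
Local Open Scope ring_scope.

Section Lin.
Variables (F : fieldType) (A : vectType F).

Definition lin (g : A -> A) := forall (c : F) x y, g (c *: x + y) = c *: g x + g y.

Lemma lin0 g : lin g -> g 0 = 0.
Proof.
move=> lg; have := lg 1 0 0; rewrite !scale1r addr0 => H.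
by apply: (addrI (g 0)); rewrite addr0 -H.
Qed.

Lemma linD g : lin g -> forall x y, g (x + y) = g x + g y.
Proof. by move=> lg x y; have := lg 1 x y; rewrite !scale1r. Qed.

Lemma linZ g : lin g -> forall c x, g (c *: x) = c *: g x.
Proof. by move=> lg c x; rewrite -[c *: x]addr0 lg lin0 // addr0. Qed.

Lemma linN g : lin g -> forall x, g (- x) = - g x.
Proof. by move=> lg x; rewrite -scaleN1r linZ // scaleN1r. Qed.

Lemma linsum g : lin g -> forall I (r : seq I) (P : pred I) (G : I -> A),
  g (\sum_(i <- r | P i) G i) = \sum_(i <- r | P i) g (G i).
Proof. by move=> lg I r P G; apply: (big_morph g (linD lg) (lin0 lg)). Qed.

Lemma lin_iter g k : lin g -> lin (iter k g).
Proof.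
move=> lg; elim: k => [|k IH] c x y //=.
by rewrite IH lg.
Qed.

Variable f : A -> A.
Hypothesis flin : lin f.

Local Notation Pv g v := (peval g f v).

Lemma pevalE N (g : {poly F}) v : (size g <= N)%N ->
  Pv g v = \sum_(i < N) g`_i *: iter i f v.
Proof.
move=> H; rewrite /peval (big_ord_widen _ (fun i => g`_i *: iter i f v) H).
rewrite big_mkcond /=; apply: eq_bigr => i _; case: ifP => // /negbT.
by rewrite -leqNgt => Hi; rewrite nth_default // scale0r.
Qed.

Lemma peval0p v : Pv 0 v = 0.
Proof. by rewrite /peval size_poly0 big_ord0. Qed.

Lemma pevalD g h v : Pv (g + h) v = Pv g v + Pv h v.
Proof.
rewrite !(pevalE (N := maxn (size g) (size h))) ?leq_maxl ?leq_maxr ?size_polyD //.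
by rewrite -big_split /=; apply: eq_bigr => i _; rewrite coefD scalerDl.
Qed.

Lemma pevalZ c g v : Pv (c *: g) v = c *: Pv g v.
Proof.
rewrite !(pevalE (N := size g)) ?size_scale_leq // scaler_sumr.
by apply: eq_bigr => i _; rewrite coefZ scalerA.
Qed.

Lemma pevalN g v : Pv (- g) v = - Pv g v.
Proof. by rewrite -scaleN1r pevalZ scaleN1r. Qed.

Lemma pevalB g h v : Pv (g - h) v = Pv g v - Pv h v.
Proof. by rewrite pevalD pevalN. Qed.

Lemma pevalC c v : Pv c%:P v = c *: v.
Proof. by rewrite (pevalE (N := 1)) ?size_polyC_leq1 // big_ord1 coefC. Qed.

Lemma peval1 v : Pv 1 v = v.
Proof. by rewrite pevalC scale1r. Qed.

Lemma pevalMX g v : Pv (g * 'X) v = Pv g (f v).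
Proof.
rewrite (pevalE (N := (size g).+1)); last first.
  by apply: leq_trans (size_polyMleq _ _) _; rewrite size_polyX addn2.
rewrite (pevalE (N := size g)) // big_ord_recl coefMX eqxx scale0r add0r.
by apply: eq_bigr => i _; rewrite coefMX /= add0n -iterS iterSr.
Qed.

Lemma lin_peval g : lin (peval g f).
Proof.
move=> c x y; rewrite !(pevalE (N := size g)) // scaler_sumr -big_split /=.
apply: eq_bigr => i _; rewrite (lin_iter i flin) scalerDr !scalerA.
by rewrite mulrC.
Qed.

Lemma pevalf g v : f (Pv g v) = Pv g (f v).
Proof.
rewrite !(pevalE (N := size g)) // linsum //; apply: eq_bigr => i _.
by rewrite linZ // -iterS iterSr.
Qed.

Lemma pevalv0 g : Pv g 0 = 0.
Proof. exact: lin0 (lin_peval g). Qed.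

Lemma pevalM g h v : Pv (g * h) v = Pv g (Pv h v).
Proof.
elim/poly_ind: g v => [|g c IH] v; first by rewrite mul0r !peval0p.
rewrite mulrDl -mulrA (mulrC 'X) mulrA pevalD pevalMX IH mul_polyC pevalZ.
by rewrite pevalD pevalMX pevalC pevalf.
Qed.

Lemma pevalXn k v : Pv ('X^k) v = iter k f v.
Proof.
elim: k v => [|k IH] v; first by rewrite expr0 peval1.
by rewrite exprSr pevalMX IH iterSr.
Qed.

Lemma pevalsum I (r : seq I) (P : pred I) (G : I -> {poly F}) v :
  Pv (\sum_(i <- r | P i) G i) v = \sum_(i <- r | P i) Pv (G i) v.
Proof.
by apply: (big_morph (fun g => Pv g v) (fun g h => pevalD g h v) (peval0p v)).
Qed.

End Lin.

Section Leib.
Variables (F : fieldType) (A : vectType F) (mul : A -> A -> A) (a : A).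
Hypothesis bil : bilinear_mul mul.
Hypothesis leib : left_leibniz mul.
Let n := \dim (fullv : {vspace A}).
Hypothesis hbasis : basis_of fullv (mkseq (fun i => lpow mul a i.+1) n).
Variable p : {poly F}.
Hypothesis hp0 : peval p (mul a) a = 0.
Hypothesis hpsz : (size p <= n.+1)%N.
Hypothesis hpnz : p != 0.

Local Notation L := (mul a).
Local Notation Pv g v := (peval g (mul a) v).

Lemma Llin : lin L.
Proof. by move=> c x y; rewrite (proj1 bil). Qed.

Lemma Rlin z : lin (fun x => mul x z).
Proof. by move=> c x y; rewrite (proj2 bil). Qed.

Lemma mulL x y : mul (L x) y = L (mul x y) - mul x (L y).
Proof. by rewrite leib addrK. Qed.

Lemma span_iter w v : v \in <<mkseq (fun i => iter i L w) n>>%VS ->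
  exists u, v = Pv u w.
Proof.
move=> /(coord_span (X := in_tuple _)) ->.
set X := mkseq _ _.
exists (\sum_(i < size X) coord (in_tuple X) i v *: 'X^i).
rewrite pevalsum; apply: eq_bigr => i _.
rewrite pevalZ pevalXn; congr (_ *: _).
have hi : (nat_of_ord i < size X)%N := ltn_ord i.
move: (nat_of_ord i) hi => k hk.
have hk' : (k < n)%N by move: hk; rewrite /X size_mkseq.
by rewrite /= /X nth_mkseq.
Qed.

Lemma surj v : exists g, v = Pv g a.
Proof.
apply: span_iter; rewrite (span_basis hbasis); exact: memvf.
Qed.

Lemma ker0 (r : {poly F}) : (size r <= n)%N -> Pv r a = 0 -> r = 0.
Proof.
set X := mkseq (fun i => lpow mul a i.+1) n.
have sX : size X = n by rewrite size_mkseq.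
move=> sr; rewrite (@pevalE _ _ L (size X)); last by rewrite sX.
move=> H.
have fr : free (in_tuple X) by exact: basis_free hbasis.
have := (freeP fr) (fun i => r`_i).
have -> : \sum_(i < size X) r`_i *: (in_tuple X)`_i =
          \sum_(i < size X) r`_i *: iter i L a.
  apply: eq_bigr => i _; congr (_ *: _).
  have hi : (nat_of_ord i < size X)%N := ltn_ord i.
  move: (nat_of_ord i) hi => k hk.
  have hk' : (k < n)%N by rewrite -sX.
  by rewrite /= /X nth_mkseq.
move=> /(_ H) Hc; apply/polyP => i; rewrite coef0.
case: (ltnP i (size X)) => hi; first exact: (Hc (Ordinal hi)).
by rewrite nth_default // (leq_trans sr) // -sX.
Qed.

Lemma pker w : Pv p w = 0.
Proof.
have [g ->] := surj w.
by rewrite -(pevalM Llin) mulrC (pevalM Llin) hp0 (pevalv0 Llin).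
Qed.

Lemma dvd_peval (h : {poly F}) w : p %| h -> Pv h w = 0.
Proof. by move=> /divpK <-; rewrite mulrC (pevalM Llin) pker. Qed.

Lemma peval_dvd (g : {poly F}) : Pv g a = 0 -> p %| g.
Proof.
move=> H; apply/modp_eq0P; apply: ker0.
  by rewrite -ltnS; apply: leq_trans hpsz; rewrite ltn_modp.
by move: H; rewrite {1}(divp_eq g p) pevalD (pevalM Llin) hp0 (pevalv0 Llin) add0r.
Qed.

Lemma act g y : mul (Pv g a) y = g`_0 *: L y.
Proof.
elim/poly_ind: g y => [|g c IH] y.
  by rewrite peval0p coef0 scale0r (lin0 (Rlin y)).
rewrite pevalD pevalMX pevalC -pevalf; last exact: Llin.
rewrite (linD (Rlin y)) (linZ (Rlin y)) mulL IH (linZ Llin) -IH subrr add0r.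
by rewrite coefD coefMX coefC /= add0r.
Qed.

Definition inv (U : {vspace A}) := forall v, v \in U -> L v \in U.

Lemma inv_peval U g v : inv U -> v \in U -> Pv g v \in U.
Proof.
move=> iU; elim/poly_ind: g v => [|g c IH] v vU; first by rewrite peval0p mem0v.
rewrite pevalD pevalMX pevalC.
by rewrite memvD ?memvZ // IH // iU.
Qed.

Lemma inv_full U : inv U -> a \in U -> U = fullv.
Proof.
move=> iU aU; apply/eqP; rewrite eqEsubv subvf /=; apply/subvP => v _.
by have [g ->] := surj v; apply: inv_peval.
Qed.

Definition cyc w := <<mkseq (fun i => iter i L w) n>>%VS.

Lemma cycP w v : v \in cyc w <-> exists u, v = Pv u w.
Proof.
split; first exact: span_iter.
case=> u ->; rewrite {1}(divp_eq u p) pevalD (pevalM Llin) pker (pevalv0 Llin) add0r.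
rewrite (@pevalE _ _ L (n)); last first.
  by rewrite -ltnS; apply: leq_trans hpsz; rewrite ltn_modp.
apply: memv_suml => i _; apply: memvZ; apply: memv_span.
by rewrite /mkseq; apply: map_f; rewrite mem_iota /= add0n.
Qed.

Lemma inv_cyc w : inv (cyc w).
Proof.
move=> v /cycP [u ->]; apply/cycP; exists (u * 'X).
by rewrite pevalMX pevalf //; exact: Llin.
Qed.

Lemma cyc_self w : w \in cyc w.
Proof. by apply/cycP; exists 1; rewrite peval1. Qed.

Lemma inv_add U V : inv U -> inv V -> inv (U + V)%VS.
Proof.
move=> iU iV v /memv_addP [u uU [w wV ->]].
by rewrite (linD Llin) memv_add // ?iU ?iV.
Qed.

Definition za x := forall y, mul x y = 0.

Lemma za_L x : za x -> za (L x).
Proof. by move=> zx y; rewrite mulL !zx (lin0 Llin) subrr. Qed.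

Lemma za_add x y : za x -> za y -> za (x + y).
Proof. by move=> zx zy z; rewrite (linD (Rlin z)) zx zy addr0. Qed.

Lemma za_peval u x : za x -> za (Pv u x).
Proof.
elim/poly_ind: u x => [|g c IH] x zx.
  by move=> y; rewrite peval0p (lin0 (Rlin y)).
rewrite pevalD pevalMX pevalC.
by move=> y; rewrite (linD (Rlin y)) (linZ (Rlin y)) IH ?zx ?scaler0 ?addr0 //; apply: za_L.
Qed.

Lemma subalg_inv U x y : is_subalg mul U -> x \in U -> mul x y != 0 -> inv U.
Proof.
move=> sU xU; have [g xE] := surj x; rewrite xE act => nz v vU.
have c0 : g`_0 != 0 by apply: contraNneq nz => ->; rewrite scale0r.
have : mul x v \in U by apply: sU.
rewrite xE act => H; have := memvZ (g`_0)^-1 H.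
by rewrite scalerA mulVf // scale1r.
Qed.

Lemma inv_subalg U : inv U -> is_subalg mul U.
Proof.
move=> iU x y _ yU; have [g ->] := surj x; rewrite act.
by apply: memvZ; apply: iU.
Qed.

Definition maxinv (M : {vspace A}) :=
  [/\ inv M, M != fullv &
      forall V : {vspace A}, inv V -> (M <= V)%VS -> V = M \/ V = fullv].

Lemma notza_all (U : {vspace A}) :
  ~ (exists x y, x \in U /\ mul x y != 0) -> forall x, x \in U -> za x.
Proof.
move=> H x xU y; apply/eqP; apply/negPn/negP => nz; apply: H.
by exists x, y.
Qed.

Lemma maxsub_maxinv M : is_max_subalg mul M -> maxinv M.
Proof.
case=> sM nM maxM.
have iM : inv M.
  case: (classic (exists x y, x \in M /\ mul x y != 0)).
    by case=> x [y [xM nz]]; apply: (subalg_inv sM xM nz).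
  move/notza_all => zM m mM.
  set W := (M + cyc m)%VS.
  have zW : forall x, x \in W -> za x.
    move=> x /memv_addP [u uM [w /cycP [v ->] ->]].
    by apply: za_add; [apply: zM | apply: za_peval; apply: zM].
  have sW : is_subalg mul W by move=> x y xW _; rewrite zW // mem0v.
  case: (maxM W sW (addvSl _ _)) => WE.
    rewrite -WE; apply: (subvP (addvSr M (cyc m))); exact: inv_cyc (cyc_self m).
  have : a \in W by rewrite WE memvf.
  by move=> /zW za0; rewrite za0 mem0v.
split=> // V iV sMV; exact: maxM (inv_subalg iV) sMV.
Qed.

Lemma maxinv_maxsub M : maxinv M -> is_max_subalg mul M.
Proof.
case=> iM nM maxM; split=> //; first exact: inv_subalg.
move=> V sV sMV.
case: (classic (exists x y, x \in V /\ mul x y != 0)).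
  by case=> x [y [xV nz]]; apply: maxM (subalg_inv sV xV nz) sMV.
move/notza_all => zV.
case: (classic (V <= M)%VS) => [sVM|nsVM].
  by left; apply/eqP; rewrite eqEsubv sVM sMV.
have [v vV vM] : exists2 v, v \in V & v \notin M.
  apply: NNPP => H; apply: nsVM; apply/subvP => v vV.
  by apply: NNPP => vM; apply: H; exists v => //; apply/negP.
set W := (M + cyc v)%VS.
have iW : inv W by apply: inv_add => //; apply: inv_cyc.
case: (maxM W iW (addvSl _ _)) => WE.
  by case/negP: vM; rewrite -WE; apply: (subvP (addvSr M (cyc v))); exact: cyc_self.
have : a \in W by rewrite WE memvf.
move=> /memv_addP [u uM [w /cycP [g ->] aE]].
have za0 : za a.
  rewrite aE; apply: za_add; first by apply: zV; apply: (subvP sMV).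
  by apply: za_peval; apply: zV.
apply: maxM => //; move=> x xV; by rewrite za0 mem0v.
Qed.

Lemma frattiniP b : in_frattini mul b <-> forall M, maxinv M -> b \in M.
Proof.
split=> H M HM; first by apply: H; apply: maxinv_maxsub.
by apply: H; apply: maxsub_maxinv.
Qed.


Lemma irred_coprime (r h : {poly F}) : irreducible_poly r -> ~~ (r %| h) -> coprimep r h.
Proof.
move=> [sr ir] nd; rewrite coprimep_def; apply/negPn/negP => H.
have E := ir _ H (dvdp_gcdl r h).
by case/negP: nd; rewrite -(eqp_dvdl _ E) dvdp_gcdr.
Qed.

Lemma maxinv_cyc (r : {poly F}) : r %| p -> irreducible_poly r -> maxinv (cyc (Pv r a)).
Proof.
move=> rp ir; split; first exact: inv_cyc.
- apply/eqP => E.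
  have : a \in cyc (Pv r a) by rewrite E memvf.
  move=> /cycP [u] aE.
  have : Pv (1 - u * r) a = 0 by rewrite pevalB peval1 (pevalM Llin) -aE subrr.
  move=> /peval_dvd /(dvdp_trans rp) H1.
  have := dvdp_add H1 (dvdp_mull u (dvdpp r)).
  rewrite subrK dvdp1 => /eqP sz; by move: ir.1; rewrite sz.
- move=> V iV sV.
  case: (classic (V <= cyc (Pv r a))%VS) => [sVW|nsVW].
    by left; apply/eqP; rewrite eqEsubv sVW sV.
  right.
  have [v vV vW] : exists2 v, v \in V & v \notin cyc (Pv r a).
    apply: NNPP => H; apply: nsVW; apply/subvP => v vV.
    by apply: NNPP => vM; apply: H; exists v => //; apply/negP.
  have [h vE] := surj v.
  have nd : ~~ (r %| h).
    apply: contra vW => /divpK hE; apply/cycP; exists (h %/ r).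
    by rewrite vE -(pevalM Llin) hE.
  have /Bezout_eq1_coprimepP [[u1 u2] /= E] := irred_coprime ir nd.
  apply: inv_full => //.
  have -> : a = Pv (u1 * r) a + Pv u2 v by rewrite vE -(pevalM Llin) -pevalD E peval1.
  rewrite (pevalM Llin) memvD //; last exact: inv_peval.
  by apply: (subvP sV); apply/cycP; exists u1.
Qed.

Lemma main_core s (ps : 'I_s -> {poly F}) (ns : 'I_s -> nat) :
  (forall i, ps i \is monic) -> (forall i, irreducible_poly (ps i)) ->
  injective ps -> (forall i, (0 < ns i)%N) ->
  p = \prod_(i < s) ps i ^+ ns i ->
  forall b, in_frattini mul b <-> Pv (\prod_(i < s) ps i ^+ (ns i).-1) b = 0.
Proof.
move=> hmon hirr hinj hns hp b.
set q := \prod_(i < s) _.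
set r := \prod_(i < s) ps i.
have pqr : p = q * r.
  rewrite hp /q /r -big_split /=; apply: eq_bigr => i _.
  by rewrite -exprSr prednK.
have qnz : q != 0 by apply: monic_neq0; apply: monic_prod => i _; apply: monic_exp.
have psp : forall i, ps i %| p.
  move=> i; rewrite hp (bigD1 i) //=; apply: dvdp_mulr.
  exact: dvdp_exp (hns i) (dvdpp _).
have cop : forall i j, i != j -> coprimep (ps i) (ps j).
  move=> i j nij; apply: irred_coprime => //; apply/negP => dij.
  have szi : size (ps i) != 1%N by rewrite neq_ltn (hirr i).1 orbT.
  have := (hirr j).2 (ps i) szi dij.
  rewrite (eqp_monic (hmon i) (hmon j)) => /eqP /hinj eij.
  by rewrite eij eqxx in nij.
have rdvd : forall g, (forall i, ps i %| g) -> r %| g.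
  move=> g H.
  have claim : forall l : seq 'I_s, uniq l -> \prod_(i <- l) ps i %| g.
    elim => [|j l IH] /=; first by rewrite big_nil dvd1p.
    move=> /andP [jl ul]; rewrite big_cons Gauss_dvdp ?H ?IH //.
    rewrite big_seq; apply: (big_ind (coprimep (ps j))) => [|x y hx hy|i il]; first exact: coprimep1.
      by rewrite coprimepMr hx hy.
    by apply: cop; apply: contraNneq jl => ->.
  exact: (claim _ (index_enum_uniq _)).
split.
- move=> /frattiniP Hb.
  have [g bE] := surj b.
  have hg : forall i, ps i %| g.
    move=> i; have := Hb _ (maxinv_cyc (psp i) (hirr i)).
    move=> /cycP [u]; rewrite bE -(pevalM Llin) => E.
    have : Pv (g - u * ps i) a = 0 by rewrite pevalB E subrr.
    move=> /peval_dvd /(dvdp_trans (psp i)) H.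
    by have := dvdp_add H (dvdp_mull u (dvdpp (ps i))); rewrite subrK.
  rewrite bE -(pevalM Llin); apply: dvd_peval; rewrite pqr.
  exact: dvdp_mul (dvdpp q) (rdvd g hg).
- move=> Hq; apply/frattiniP => M [iM nM maxM].
  have [g bE] := surj b.
  have rg : r %| g.
    have : p %| q * g by apply: peval_dvd; rewrite (pevalM Llin) -bE.
    by rewrite pqr dvdp_mul2l.
  set K := \max_(i < s) ns i.
  have pgK : p %| g ^+ K.
    apply: dvdp_trans (dvdp_exp2r K rg).
    rewrite /r -prodrXl hp.
    apply: (big_ind2 (fun x y => x %| y)) => //; first by move=> x1 x2 y1 y2; apply: dvdp_mul.
    by move=> i _; apply: dvdp_exp2l; apply: leq_bigmax.
  apply: NNPP => bM.
  set W := (M + cyc b)%VS.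
  case: (maxM W (inv_add iM (inv_cyc (w:=b))) (addvSl _ _)) => WE.
    by apply: bM; rewrite -WE; apply: (subvP (addvSr _ _)); exact: cyc_self.
  have : a \in W by rewrite WE memvf.
  move=> /memv_addP [m mM [w /cycP [u ->] aE]].
  set h := u * g.
  have Hm : Pv (1 - h) a \in M.
    by rewrite pevalB peval1 /h (pevalM Llin) -bE {1}aE addrK.
  have HK : Pv (h ^+ K) a = 0.
    by apply: dvd_peval; rewrite /h exprMn; apply: dvdp_mull.
  have : Pv (1 - h ^+ K) a \in M.
    have -> : 1 - h ^+ K = (\sum_(i < K) 1 ^+ (K.-1 - i) * h ^+ i) * (1 - h).
      by rewrite mulrC -subrXX expr1n.
    by rewrite (pevalM Llin); apply: inv_peval.
  rewrite pevalB peval1 HK subr0 => aM.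
  by rewrite (inv_full iM aM) eqxx in nM.
Qed.

End Leib.

Theorem mainTheorem7 (F : fieldType) (A : vectType F) (mul : A -> A -> A) (a : A)
  (alpha : nat -> F) (s : nat) (ps : 'I_s -> {poly F}) (ns : 'I_s -> nat) :
  bilinear_mul mul ->
  left_leibniz mul ->
  generated_by mul a ->
  basis_of fullv (mkseq (fun i => lpow mul a i.+1) (\dim (fullv : {vspace A}))) ->
  let n := \dim (fullv : {vspace A}) in
  mul a (lpow mul a n) = \sum_(1 <= i < n.+1) alpha i *: lpow mul a i ->
  let p := 'X^n - \sum_(1 <= i < n.+1) (alpha i)%:P * 'X^(i.-1) in
  (forall i, ps i \is monic) ->
  (forall i, irreducible_poly (ps i)) ->
  injective ps ->
  (forall i, (0 < ns i)%N) ->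
  p = \prod_(i < s) ps i ^+ ns i ->
  let q := \prod_(i < s) ps i ^+ (ns i).-1 in
  forall b : A, in_frattini mul b <-> peval q (mul a) b = 0.
Proof.
move=> bil leib _ hbasis n hmul p hmon hirr hinj hns hp q b.
case: (posnP n) => [n0 | npos].
  have z : forall v : A, v = 0.
    move=> v; have := memvf v.
    have := dimv_eq0 (fullv : {vspace A}); rewrite -/n n0 eqxx => /esym/eqP ->.
    by rewrite memv0 => /eqP.
  split=> _; first by rewrite (z (peval q (mul a) b)).
  by move=> M _; rewrite (z b) mem0v.
have hpnz : p != 0.
  by rewrite hp; apply: monic_neq0; apply: monic_prod => i _; apply: monic_exp.
have hpsz : (size p <= n.+1)%N.
  rewrite /p; apply: leq_trans (size_polyD _ _) _.
  rewrite size_polyN geq_max size_polyXn leqnn /= big_nat_cond.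
  apply: (big_ind (fun x : {poly F} => size x <= n.+1)%N).
  - by rewrite size_poly0.
  - by move=> x y hx hy; apply: leq_trans (size_polyD _ _) _; rewrite geq_max hx hy.
  - move=> i /andP [/andP [_ hi] _]; rewrite mul_polyC.
    apply: leq_trans (size_scale_leq _ _) _; rewrite size_polyXn.
    by case: i hi => //= i; rewrite ltnS => /ltnW.
have hp0 : peval p (mul a) a = 0.
  rewrite /p pevalB pevalXn pevalsum.
  have -> : iter n (mul a) a = mul a (iter n.-1 (mul a) a) by rewrite -iterS prednK.
  move: hmul; rewrite /lpow => ->.
  apply/eqP; rewrite subr_eq0; apply/eqP; apply: eq_bigr => i _.
  by rewrite mul_polyC pevalZ pevalXn.
exact: (main_core bil leib hbasis hp0 hpsz hpnz hmon hirr hinj hns hp).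
Qed.
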